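(* There is an absolute constant $C$ such that for every simple temporal clique on $n$ vertices and every bidirectional fireworks cover $S$ of it (for any outcome of the arbitrary choices in the constructions), $|S|\le \frac{1}{2}\binom{n}{2}+Cn$.
   Context: A simple temporal clique is a pair $\mathcal{G}=(G,\lambda)$ where $G=(V,E)$ is the complete graph on a finite set $V$ of $n$ vertices and $\lambda:E\to\mathbb{N}$ assigns to each edge a single integer label such that any two distinct edges sharing an endpoint have different labels; the label of an arc $(x,y)$ is $\lambda(\{x,y\})$. For a vertex $v$, $e^-(v)$ (resp. $e^+(v)$) is the edge incident to $v$ with smallest (resp. largest) label. Forward construction: let $E^-$ be the set of arcs $(u,v)$ with $\{u,v\}=e^-(v)$, except that if $e^-(u)=e^-(v)=\{u,v\}$ only one of $(u,v),(v,u)$ is included (arbitrarily). Initialize $E^-_T:=E^-$; for every vertex $v$ of out-degree at least $2$ in $(V,E^-)$, with out-arcs $(v,u_1),\dots,(v,u_\ell)$ where $(v,u_\ell)$ has the largest label, for each $i<\ell$: if $u_i$ has out-degree $0$ in $(V,E^-)$ replace $(v,u_i)$ by $(u_i,v)$ in $E^-_T$, otherwise remove $(v,u_i)$ from $E^-_T$. Emitters ($X^-$) are vertices of out-degree $0$ in $(V,E^-_T)$. Backward construction: let $E^+$ be the set of arcs $(v,u)$ with $\{u,v\}=e^+(v)$, except that if $e^+(u)=e^+(v)=\{u,v\}$ only one of $(u,v),(v,u)$ is included (arbitrarily). Initialize $E^+_T:=E^+$; for every vertex $v$ of in-degree at least $2$ in $(V,E^+)$, with in-arcs $(u_1,v),\dots,(u_\ell,v)$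 where $(u_\ell,v)$ has the smallest label, for each $i<\ell$: if $u_i$ has in-degree $0$ in $(V,E^+)$ replace $(u_i,v)$ by $(v,u_i)$ in $E^+_T$, otherwise remove $(u_i,v)$ from $E^+_T$. Collectors ($X^+$) are vertices of in-degree $0$ in $(V,E^+_T)$. The bidirectional fireworks cover is $S=\{\{u,v\}:(u,v)\in E^-_T\cup E^+_T\}\cup\{\{u,v\}\in E: u\in X^-, v\in X^+\}$. *)

(* Defs.v *)
From mathcomp Require Import all_boot.
Set Implicit Arguments. Unset Strict Implicit. Unset Printing Implicit Defensive.

Section Fireworks.
Variables (V : finType) (lam : V -> V -> nat).

(* lam x y is the label lambda({x,y}) of the edge {x,y} (x != y); values on
   the diagonal are irrelevant. *)
Definition simple_temporal_clique : Prop :=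
  (forall x y, lam x y = lam y x) /\
  (forall u v w, u != v -> u != w -> v != w -> lam u v != lam u w).

Definition is_emin (v u : V) : bool :=
  (u != v) && [forall w, ((w != v) && (w != u)) ==> (lam v u < lam v w)].
Definition is_emax (v u : V) : bool :=
  (u != v) && [forall w, ((w != v) && (w != u)) ==> (lam v w < lam v u)].

(* Em is a valid outcome of the arbitrary choices defining E^- :
   arcs (u,v) with {u,v} = e^-(v); if e^-(u) = e^-(v) = {u,v}, exactly one of
   (u,v),(v,u) is included. *)
Definition is_Eminus (Em : rel V) : Prop :=
  (forall u v, Em u v -> is_emin v u) /\
  (forall u v, is_emin v u -> ~~ is_emin u v -> Em u v) /\
  (forall u v, is_emin v u -> is_emin u v -> Em u v (+) Em v u).

Definition is_Eplus (Ep : rel V) : Prop :=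
  (forall v u, Ep v u -> is_emax v u) /\
  (forall v u, is_emax v u -> ~~ is_emax u v -> Ep v u) /\
  (forall v u, is_emax v u -> is_emax u v -> Ep v u (+) Ep u v).

Definition outdeg (R : rel V) (v : V) : nat := #|[set w | R v w]|.
Definition indeg (R : rel V) (v : V) : nat := #|[set w | R w v]|.

Definition keep_minus (Em : rel V) (v u : V) : bool :=
  (outdeg Em v < 2) || [forall w, Em v w ==> (lam v w <= lam v u)].

Definition EminusT (Em : rel V) : rel V := fun x y =>
  (Em x y && keep_minus Em x y) ||
  [&& Em y x, ~~ keep_minus Em y x & outdeg Em x == 0].

Definition keep_plus (Ep : rel V) (v u : V) : bool :=
  (indeg Ep v < 2) || [forall w, Ep w v ==> (lam u v <= lam w v)].

Definition EplusT (Ep : rel V) : rel V := fun x y =>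
  (Ep x y && keep_plus Ep y x) ||
  [&& Ep y x, ~~ keep_plus Ep x y & indeg Ep y == 0].

Definition emitters (Em : rel V) : {set V} :=
  [set x | outdeg (EminusT Em) x == 0].
Definition collectors (Ep : rel V) : {set V} :=
  [set x | indeg (EplusT Ep) x == 0].

Definition fireworks_cover (Em Ep : rel V) : {set {set V}} :=
  [set e : {set V} |
     [exists x, exists y, (EminusT Em x y || EplusT Ep x y) && (e == [set x; y])]
  || [exists x, exists y, [&& x \in emitters Em, y \in collectors Ep,
                              x != y & e == [set x; y]]]].

End Fireworks.

(* Main.v *)
Require Import Defs.
From mathcomp Require Import all_boot.
From mathcomp Require Import zify.
Set Implicit Arguments. Unset Strict Implicit. Unset Printing Implicit Defensive.

Definition Tg (V : finType) (R K : rel V) : rel V := fun x y =>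
  (R x y && K x y) || [&& R y x, ~~ K y x & outdeg R x == 0].

Lemma core (V : finType) (R K : rel V) :
  (forall u, (forall w, ~~ R u w) -> exists p, R p u) ->
  (forall x u, R x u -> exists v, R x v && K x v) ->
  (forall x u v, R x u -> R x v -> K x u -> K x v -> u = v) ->
  2 * #|[set x | outdeg (Tg R K) x == 0]| <= #|V|.
Proof.
move=> H1 H2 H3.
set E := [set x | _].
have outT0 : forall x y, x \in E -> Tg R K x y = false.
  move=> x y; rewrite inE /outdeg cards_eq0 => /eqP/setP/(_ y); rewrite !inE.
  by [].
have noR : forall u w, u \in E -> ~~ R u w.
  move=> u w uE; apply/negP => Ruw.
  have [v /andP[Ruv Kuv]] := H2 _ _ Ruw.
  by have := outT0 u v uE; rewrite /Tg Ruv Kuv.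
have outR0 : forall u, u \in E -> outdeg R u == 0.
  move=> u uE; rewrite /outdeg cards_eq0; apply/eqP/setP => w; rewrite !inE.
  exact/negbTE/noR.
pose f u := odflt u [pick p | R p u].
have fR : forall u, u \in E -> R (f u) u.
  move=> u uE; rewrite /f; case: pickP => [p //|none].
  have [p Rp] := H1 u (fun w => noR u w uE).
  by rewrite none in Rp.
have fK : forall u, u \in E -> K (f u) u.
  move=> u uE; apply/negPn/negP => nK.
  by have := outT0 u (f u) uE; rewrite /Tg fR // nK outR0 // orbT.
have finj : {in E &, injective f}.
  move=> u v uE vE efuv; apply: (H3 (f u)).
  - exact: fR.
  - rewrite efuv; exact: fR.
  - exact: fK.
  - rewrite efuv; exact: fK.
have fnE : forall u, u \in E -> f u \notin E.
  move=> u uE; apply/negP => fE.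
  by have := noR (f u) u fE; rewrite (fR u uE).
have disj : [disjoint E & f @: E].
  rewrite disjoint_subset; apply/subsetP => x xE; rewrite inE.
  apply/negP => /imsetP[u uE exu]; subst x.
  by have := fnE u uE; rewrite xE.
have := leq_card_setU E (f @: E); case=> _; rewrite disj => /eqP e.
by rewrite mul2n -addnn -{2}(card_in_imset finj) -e max_card.
Qed.

Section Main.
Variables (V : finType) (lam : V -> V -> nat).
Hypothesis hst : simple_temporal_clique lam.

Lemma other_ex (v : V) : 1 < #|V| -> exists w, w != v.
Proof.
move=> n2; have : 0 < #|[set~ v]| by rewrite cardsC1; lia.
by case/card_gt0P => w; rewrite in_setC1 => wv; exists w.
Qed.

Lemma emin_ex v : 1 < #|V| -> exists u, is_emin lam v u.
Proof.
case: hst => sym dist n2; have [w wv] := other_ex v n2.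
case: (@arg_minnP _ w (fun x => x != v) (lam v)) => // u uv umin.
exists u; rewrite /is_emin uv /=.
apply/forallP => x; apply/implyP => /andP[xv xu].
rewrite ltn_neqAle umin // andbT; apply: dist => //; by rewrite eq_sym.
Qed.

Lemma emax_ex v : 1 < #|V| -> exists u, is_emax lam v u.
Proof.
case: hst => sym dist n2; have [w wv] := other_ex v n2.
case: (@arg_maxnP _ w (fun x => x != v) (lam v)) => // u uv umax.
exists u; rewrite /is_emax uv /=.
apply/forallP => x; apply/implyP => /andP[xv xu].
rewrite ltn_neqAle; apply/andP; split; last exact: umax.
rewrite eq_sym; apply: dist => //; by rewrite eq_sym.
Qed.

Lemma emin_uniq v x x' : is_emin lam v x -> is_emin lam v x' -> x = x'.
Proof.
case/andP=> xv /forallP h1; case/andP=> xv' /forallP h2.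
apply/eqP; apply/negP => /negP nx.
have a := implyP (h1 x'); have b := implyP (h2 x).
rewrite xv' eq_sym nx /= in a; rewrite xv nx /= in b.
have := a erefl; have := b erefl; lia.
Qed.

Lemma emax_uniq v x x' : is_emax lam v x -> is_emax lam v x' -> x = x'.
Proof.
case/andP=> xv /forallP h1; case/andP=> xv' /forallP h2.
apply/eqP; apply/negP => /negP nx.
have a := implyP (h1 x'); have b := implyP (h2 x).
rewrite xv' eq_sym nx /= in a; rewrite xv nx /= in b.
have := a erefl; have := b erefl; lia.
Qed.


Lemma emitters_bound Em : is_Eminus lam Em -> 1 < #|V| ->
  2 * #|emitters lam Em| <= #|V|.
Proof.
move=> [A1 [A2 A3]] n2; case: hst => sym dist.
have -> : emitters lam Em = [set x | outdeg (Tg Em (keep_minus lam Em)) x == 0] by [].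
apply: core.
- move=> u noout; have [x ex] := emin_ex u n2; exists x.
  case ex' : (is_emin lam x u).
  + by have := A3 _ _ ex ex'; rewrite (negbTE (noout x)) addbF.
  + exact: A2 _ _ ex (negbT ex').
- move=> x u Rxu; case: (leqP 2 (outdeg Em x)) => h.
  + case: (@arg_maxnP _ u (Em x) (lam x)) => // v Rxv vmax.
    exists v; rewrite Rxv /keep_minus /=; apply/orP; right.
    by apply/forallP => w; apply/implyP => Rw; exact: vmax.
  + by exists u; rewrite Rxu /keep_minus h.
- move=> x u v Rxu Rxv; rewrite /keep_minus.
  case: (ltnP (outdeg Em x) 2) => h /= Ku Kv.
  + by apply: (card_le1_eqP h); rewrite inE.
  + have a := implyP (forallP Ku v) Rxv; have b := implyP (forallP Kv u) Rxu.
    apply/eqP; apply/negP => /negP nuv.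
    have xu : x != u by case/andP: (A1 _ _ Rxu); rewrite eq_sym.
    have xv : x != v by case/andP: (A1 _ _ Rxv); rewrite eq_sym.
    by have := dist x u v xu xv nuv; move/eqP; lia.
Qed.

Lemma collectors_bound Ep : is_Eplus lam Ep -> 1 < #|V| ->
  2 * #|collectors lam Ep| <= #|V|.
Proof.
move=> [A1 [A2 A3]] n2; case: hst => sym dist.
have -> : collectors lam Ep =
  [set x | outdeg (Tg (fun a b => Ep b a) (keep_plus lam Ep)) x == 0] by [].
apply: core.
- move=> u noin; have [p ep] := emax_ex u n2; exists p.
  case ep' : (is_emax lam p u).
  + by have := A3 _ _ ep ep'; rewrite (negbTE (noin p)) addbF.
  + exact: A2 _ _ ep (negbT ep').
- move=> x u Rxu; case: (leqP 2 (indeg Ep x)) => h.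
  + case: (@arg_minnP _ u (fun w => Ep w x) (fun w => lam w x)) => // v Rvx vmin.
    exists v; rewrite Rvx /keep_plus /=; apply/orP; right.
    by apply/forallP => w; apply/implyP => Rw; exact: vmin.
  + by exists u; rewrite Rxu /keep_plus h.
- move=> x u v Rxu Rxv; rewrite /keep_plus.
  case: (ltnP (indeg Ep x) 2) => h /= Ku Kv.
  + by apply: (card_le1_eqP h); rewrite inE.
  + have a := implyP (forallP Ku v) Rxv; have b := implyP (forallP Kv u) Rxu.
    apply/eqP; apply/negP => /negP nuv.
    have xu : x != u by case/andP: (A1 _ _ Rxu).
    have xv : x != v by case/andP: (A1 _ _ Rxv).
    have := dist x u v xu xv nuv; rewrite (sym x u) (sym x v); move/eqP; lia.
Qed.

Lemma edges_bound (R : rel V) : (forall x x' y, R x y -> R x' y -> x = x') ->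
  #|[set e : {set V} | [exists x, exists y, R x y && (e == [set x; y])]]| <= #|V|.
Proof.
move=> U; pose g y := [set y; odflt y [pick x | R x y]].
apply: (@leq_trans #|g @: [set: V]|); last first.
  exact: leq_trans (leq_imset_card _ _) (max_card _).
apply: subset_leq_card; apply/subsetP => e.
rewrite inE => /existsP[x /existsP[y /andP[Rxy /eqP->]]].
apply/imsetP; exists y; rewrite ?inE //.
rewrite /g; case: pickP => [x' Rx'|none]; last by rewrite none in Rxy.
by rewrite (U _ _ _ Rx' Rxy) setUC.
Qed.

End Main.

Theorem theorem7 :
  exists C : nat,
    forall (V : finType) (lam : V -> V -> nat) (Em Ep : rel V),
      simple_temporal_clique lam ->
      is_Eminus lam Em -> is_Eplus lam Ep ->
      2 * #|fireworks_cover lam Em Ep| <= 'C(#|V|, 2) + 2 * C * #|V|.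
Proof.
exists 3 => V lam Em Ep hst hEm hEp.
set S1 := [set e : {set V} | [exists x, exists y, Em x y && (e == [set x; y])]].
set S2 := [set e : {set V} | [exists x, exists y, Ep y x && (e == [set x; y])]].
set S3 := (fun p : V * V => [set p.1; p.2]) @: setX (emitters lam Em) (collectors lam Ep).
have inS1 : forall x y, Em x y -> [set x; y] \in S1.
  by move=> x y h; rewrite inE; apply/existsP; exists x; apply/existsP; exists y; rewrite h eqxx.
have inS2 : forall x y, Ep y x -> [set x; y] \in S2.
  by move=> x y h; rewrite inE; apply/existsP; exists x; apply/existsP; exists y; rewrite h eqxx.
have sub : fireworks_cover lam Em Ep \subset S1 :|: S2 :|: S3.
  apply/subsetP => e; rewrite inE => /orP[/existsP[x /existsP[y /andP[/orP[HT|HT] /eqP->]]] | /existsP[x /existsP[y /and4P[xE yC _ /eqP->]]]].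
  - have : Em x y || Em y x by case/orP: HT => [/andP[-> _] | /and3P[-> _ _]] //; rewrite orbT.
    rewrite !inE; case/orP => h; apply/orP; left; apply/orP; left.
    + by have := inS1 _ _ h; rewrite inE.
    + by have := inS1 _ _ h; rewrite inE setUC.
  - have : Ep x y || Ep y x by case/orP: HT => [/andP[-> _] | /and3P[-> _ _]] //; rewrite orbT.
    rewrite !inE; case/orP => h; apply/orP; left; apply/orP; right.
    + by have := inS2 _ _ h; rewrite inE setUC.
    + by have := inS2 _ _ h; rewrite inE.
  - apply/setUP; right; apply/imsetP; exists (x, y) => //.
    by rewrite inE /= xE yC.
have c1 : #|S1| <= #|V|.
  apply: edges_bound => x x' y h1 h2.
  case: hEm => A1 _; exact: emin_uniq (A1 _ _ h1) (A1 _ _ h2).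
have c2 : #|S2| <= #|V|.
  apply: (edges_bound (R := fun a b => Ep b a)) => x x' y h1 h2.
  case: hEp => A1 _; exact: emax_uniq (A1 _ _ h1) (A1 _ _ h2).
have c3 : #|S3| <= #|emitters lam Em| * #|collectors lam Ep|.
  by rewrite -cardsX leq_imset_card.
have cU : #|fireworks_cover lam Em Ep| <= #|S1| + #|S2| + #|S3|.
  apply: leq_trans (subset_leq_card sub) _.
  rewrite cardsU; apply: leq_trans (leq_subr _ _) _.
  by rewrite leq_add2r cardsU leq_subr.
have bin : 2 * 'C(#|V|, 2) = #|V| * #|V|.-1 by rewrite -mul_bin_diag bin1.
have ca : #|emitters lam Em| <= #|V| := max_card _.
have cb : #|collectors lam Ep| <= #|V| := max_card _.
set a := #|emitters lam Em| in c3 ca cb *.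
set b := #|collectors lam Ep| in c3 ca cb *.
set n := #|V| in c1 c2 ca cb bin *.
case: (leqP n 1) => hn.
- have : a * b <= 1 * b := leq_mul (leq_trans ca hn) (leqnn b). lia.
- have ha : 2 * a <= n := emitters_bound hst hEm hn.
  have hb : 2 * b <= n := collectors_bound hst hEp hn.
  have : (2 * a) * (2 * b) <= n * n := leq_mul ha hb. nia.
Qed.
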